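(* Let $A\in\mathbb C^{N\times N}$ be an adjacency matrix with $k$ distinct eigenvalues $\lambda_1,\dots,\lambda_k$, and for each $i=1,\dots,k$ let $V_i\in\mathbb C^{N\times a_i}$ ($a_i$ the algebraic multiplicity of $\lambda_i$) be an eigenvector submatrix whose columns form the union of the Jordan chains of $\lambda_i$ in a Jordan decomposition $A=VJV^{-1}$, normalized so that $\|V_i\|_1=1$. Then the graph total variation satisfies $\mathrm{TV}_G(V_i)=\|V_i-AV_i\|_1\le |1-\lambda_i|+1$.
   Context: $\|\cdot\|_1$ denotes the matrix norm induced by the vector $1$-norm (maximum absolute column sum). A Jordan chain of $A$ for $\lambda$ is a sequence $v_1,\dots,v_p$ with $(A-\lambda I)v_1=0$, $v_1\neq0$, and $(A-\lambda I)v_j=v_{j-1}$ for $j\ge2$; the union of the Jordan chains of $\lambda_i$ spans the generalized eigenspace $\mathrm{Ker}(A-\lambda_iI)^{m_i}$. *)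

(* Defs.v *)
From HB Require Import structures.
From mathcomp Require Import all_boot all_order all_algebra.
From mathcomp Require Import complex.
From mathcomp Require Import reals.
Set Implicit Arguments. Unset Strict Implicit. Unset Printing Implicit Defensive.
Import Order.TTheory GRing.Theory Num.Theory.
Local Open Scope ring_scope.

(* Matrix norm induced by the vector 1-norm: maximum absolute column sum.
   The column sums are nonnegative reals (inside R[i]), so the max is taken
   w.r.t. the (partial) order of the numeric field R[i], starting from 0. *)
Definition mxnorm1 (R : realType) (m n : nat) (M : 'M[R[i]]_(m, n)) : R[i] :=
  \big[Num.max/0]_(j < n) \sum_(i < m) `|M i j|.

(* The columns of V (an N x a matrix) form a union of Jordan chains of A for
   the eigenvalue lam, listed consecutively: each column v_j either starts a
   chain ((A - lam I) v_j = 0 with v_j <> 0) or continues the chain of the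
   previous column ((A - lam I) v_j = v_(j-1)). *)
Definition jordan_chains_columns (R : realType) (N a : nat)
    (A : 'M[R[i]]_N) (lam : R[i]) (V : 'M[R[i]]_(N, a)) : Prop :=
  forall j : 'I_a,
    ((A - lam%:M) *m col j V = 0 /\ col j V != 0)
    \/ (exists j' : 'I_a, j'.+1 = j /\ (A - lam%:M) *m col j V = col j' V).

Definition alg_mult (R : realType) (N : nat) (A : 'M[R[i]]_N) (lam : R[i]) : nat :=
  mup lam (char_poly A).

(* Main.v *)
Require Import Defs.
From HB Require Import structures.
From mathcomp Require Import all_boot all_order all_algebra.
From mathcomp Require Import complex.
From mathcomp Require Import reals.
Import Order.TTheory GRing.Theory Num.Theory.
Local Open Scope ring_scope.

Section H.
Variable R : realType.
Local Notation C := (R[i]).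

Lemma bigmax_le (n : nat) (F : 'I_n -> C) (c : C) :
  0 <= c -> (forall j, F j <= c) -> \big[Num.max/0]_(j < n) F j <= c.
Proof.
move=> c0 H; apply: (big_ind (fun x => x <= c)) => //.
by move=> x y hx hy; rewrite /Num.max; case: ifP.
Qed.

Lemma le_bigmax (n : nat) (F : 'I_n -> C) (j : 'I_n) :
  (forall k, 0 <= F k) -> F j <= \big[Num.max/0]_(k < n) F k.
Proof.
move=> F0.
suff : forall r : seq 'I_n, 0 <= \big[Num.max/0]_(k <- r) F k /\
   (j \in r -> F j <= \big[Num.max/0]_(k <- r) F k).
  by move/(_ (index_enum 'I_n)) => [_ ->] //; rewrite mem_index_enum.
elim=> [|x r [IH0 IH]]; first by rewrite big_nil.
rewrite big_cons in_cons.
have cmp : (F x >=< \big[Num.max/0]_(k <- r) F k)%R.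
  by apply: real_comparable; apply: ger0_real.
split.
  by rewrite /Num.max; case: ifP.
rewrite (comparable_le_max _ cmp).
case/orP => [/eqP->|/IH ->]; first by rewrite lexx.
by rewrite orbT.
Qed.

Lemma colsum_le (m n : nat) (M : 'M[C]_(m, n)) j :
  \sum_(i < m) `|M i j| <= mxnorm1 M.
Proof. have := @le_bigmax n (fun j => \sum_(i < m) `|M i j|) j. rewrite /mxnorm1 /=. apply => k.
by apply: sumr_ge0 => i _. Qed.
End H.

Theorem theorem2 (R : realType) (N : nat) (A : 'M[R[i]]_N) (lam : R[i])
    (a : nat) (V : 'M[R[i]]_(N, a)) :
  eigenvalue A lam ->
  a = alg_mult A lam ->
  jordan_chains_columns A lam V ->
  \rank V = a ->
  (forall x : 'cV[R[i]]_N,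
      (exists c : 'cV[R[i]]_a, x = V *m c) <-> (A - lam%:M) ^+ a *m x = 0) ->
  mxnorm1 V = 1 ->
  mxnorm1 (V - A *m V) <= `|1 - lam| + 1.
Proof.
move=> _ _ HJ _ _ HV.
have E : V - A *m V = (1 - lam) *: V - (A - lam%:M) *m V.
  by rewrite mulmxBl mul_scalar_mx scalerBl scale1r opprB addrA subrK.
rewrite E; apply: bigmax_le; first by rewrite addr_ge0.
move=> j.
set B := (A - lam%:M) *m V.
have HB : \sum_(i < N) `|B i j| <= 1.
  have colB : forall i, B i j = ((A - lam%:M) *m col j V) i 0.
    by move=> i; rewrite colE mulmxA -colE !mxE.
  case: (HJ j) => [[H0 _]|[j' [_ H1]]].
    by under eq_bigr => i _ do rewrite colB H0 mxE normr0; rewrite big1 // ler01.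
  under eq_bigr => i _ do rewrite colB H1 mxE.
  by rewrite -HV colsum_le.
apply: le_trans (_ : \sum_(i < N) (`|1 - lam| * `|V i j| + `|B i j|) <= _).
  apply: ler_sum => i _; rewrite !mxE.
  by apply: le_trans (ler_normB _ _) _; rewrite normrM.
rewrite big_split /= -mulr_sumr lerD //.
rewrite -[X in _ <= X]mulr1 ler_wpM2l //.
by rewrite -HV colsum_le.
Qed.
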